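(* Let $\lambda=(\lambda_1,\ldots,\lambda_k)\in\mathcal P_k$, let $\mu$ be a partition maximal for $\lambda$, and let $P(\lambda)=(P_1,\ldots,P_r)$. If $i\in P_{h+1}$ for some $0\le h<r$, then $\mu_i=\lambda_i+\operatorname{sylv}(\lambda^{(h)})$.
   Context: A partition is a weakly decreasing sequence of nonnegative integers; $\mathcal P_k$ is the set of partitions with at most $k$ nonzero parts, written as sequences $(\lambda_1,\ldots,\lambda_k)$ (trailing zeros allowed), identified with Young diagrams; $|\lambda|=\sum\lambda_i$. For $\lambda\subseteq\mu$ in $\mathcal P_k$, ${\sf Tab}(\mu/\lambda)$ is the set of fillings of $\mu/\lambda$ with entries in $\{1,\ldots,k\}$ strictly increasing along rows (left to right) and columns (top to bottom), with every entry in row $i$ at most $i-1$. $\mu$ is maximal for $\lambda$ if ${\sf Tab}(\mu/\lambda)\ne\emptyset$ and ${\sf Tab}(\nu/\lambda)=\emptyset$ whenever $\nu\in\mathcal P_k$, $\lambda\subseteq\nu$, $|\nu|>|\mu|$. $P(\lambda)=(P_1,\ldots,P_r)$ is the ordered set partition of $\{1,\ldots,k\}$ into blocks of indices with equal parts: $i,j$ lie in the same block iff $\lambda_i=\lambda_j$, and $\lambda_i>\lambda_j$ whenever $i\in P_h$, $j\in P_l$ with $h<l$. Set $\lambda^{(0)}=\emptyset$, $\lambda^{(r)}=\lambda$, and for $1\le h\le r-1$, $\lambda^{(h)}=(\lambda_1-\lambda_i,\lambda_2-\lambda_i,\ldots,\lambda_{i-1}-\lambda_i)$ where $i=\min P_{h+1}$.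 For $n\ge1$ let $\delta^n=(n,n-1,\ldots,1)$ be the staircase, and for a partition $\nu$ let $\operatorname{sylv}(\nu)=\max\{m\ge 0:\delta^m\subseteq\nu\}$ (with $\delta^0=\emptyset$). *)

(* Defs.v *)
From mathcomp Require Import all_boot.
Set Implicit Arguments. Unset Strict Implicit. Unset Printing Implicit Defensive.

(* Conventions: a partition lambda in P_k is a seq nat of size k, weakly
   decreasing (trailing zeros allowed). Indices are 0-based: the paper's
   lambda_i is [nth 0 lam (i-1)], the paper's row i is row i-1 here. *)

Definition is_part (k : nat) (l : seq nat) : bool := (size l == k) && sorted geq l.

(* containment of Young diagrams (missing parts are 0) *)
Definition subpart (a b : seq nat) : bool :=
  all (fun j => nth 0 a j <= nth 0 b j) (iota 0 (size a)).

(* cell (r,c) (0-based row r, 0-based column c) of the skew shape mu/lam *)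
Definition in_skew (lam mu : seq nat) (r c : nat) : bool :=
  (r < size mu) && (nth 0 lam r <= c < nth 0 mu r).

(* T is an element of Tab(mu/lam): entries in {1..k}, strictly increasing
   along rows and columns, entries in (paper's) row i are <= i-1, i.e. entries
   in 0-based row r are <= r. *)
Definition is_tab (k : nat) (lam mu : seq nat) (T : nat -> nat -> nat) : Prop :=
  [/\ (forall r c, in_skew lam mu r c -> 1 <= T r c <= k /\ T r c <= r),
      (forall r c c', in_skew lam mu r c -> in_skew lam mu r c' -> c < c' ->
                      T r c < T r c') &
      (forall r r' c, in_skew lam mu r c -> in_skew lam mu r' c -> r < r' ->
                      T r c < T r' c)].

Definition tab_nonempty (k : nat) (lam mu : seq nat) : Prop :=
  exists T, is_tab k lam mu T.

Definition maximal (k : nat) (lam mu : seq nat) : Prop :=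
  [/\ is_part k mu, subpart lam mu, tab_nonempty k lam mu &
      forall nu, is_part k nu -> subpart lam nu -> sumn mu < sumn nu ->
                 ~ tab_nonempty k lam nu].

Definition part_vals (l : seq nat) : seq nat := sort geq (undup l).

(* P(lambda) = (P_1,...,P_r): the h-th entry (0-based) is the block P_{h+1},
   the (0-based) indices j with lambda_j equal to the (h+1)-th largest value *)
Definition Pblocks (l : seq nat) : seq (seq nat) :=
  [seq [seq j <- iota 0 (size l) | nth 0 l j == v] | v <- part_vals l].

Definition lam_h (l : seq nat) (h : nat) : seq nat :=
  if h == 0 then [::]
  else if h < size (part_vals l) then
    let i := head 0 (nth [::] (Pblocks l) h) in   (* min P_{h+1}, 0-based *)
    [seq x - nth 0 l i | x <- take i l]
  else l.

Definition staircase (n : nat) : seq nat := [seq n - j | j <- iota 0 n].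

(* sylv nu = max { m | delta^m subset nu }; any such m is <= nu_1 *)
Definition sylv (nu : seq nat) : nat :=
  \max_(0 <= m < (nth 0 nu 0).+1 | subpart (staircase m) nu) m.

(* Main.v *)
Require Import Defs.
From mathcomp Require Import all_boot.
From mathcomp Require Import zify.
Set Implicit Arguments. Unset Strict Implicit.

Fixpoint mstar (l : seq nat) (r : nat) : nat :=
  match r with 0 => nth 0 l 0 | r'.+1 => minn (mstar l r') (nth 0 l r + r) end.

Lemma mstar_le l r j : j <= r -> mstar l r <= nth 0 l j + j.
Proof.
elim: r j => [|r IH] j /=; first by rewrite leqn0 => /eqP ->; rewrite addn0.
rewrite leq_eqVlt => /orP [/eqP -> | ]; first by rewrite geq_minr.
rewrite ltnS => /IH; lia.
Qed.

Lemma mstar_ge l r m : (forall j, j <= r -> m <= nth 0 l j + j) -> m <= mstar l r.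
Proof.
elim: r => [|r IH] H /=; first by have := H 0 (leqnn 0); rewrite addn0.
rewrite leq_min IH ?H //; move=> j Hj; apply: H; lia.
Qed.

Lemma sorted_nth_geq (s : seq nat) j j' : sorted geq s -> j <= j' -> j' < size s ->
  nth 0 s j' <= nth 0 s j.
Proof.
move=> Hs Hjj Hj'.
have := sorted_leq_nth (leT := geq) _ _ 0 Hs; apply => //.
- by move=> x y z /= H1 H2; apply: leq_trans H2 H1.
- by move=> x /=.
- rewrite inE /=; lia.
Qed.

Arguments sorted_nth_geq {s j j'}.

Lemma sumn_eq (s t : seq nat) : size s = size t -> (forall j, nth 0 s j <= nth 0 t j) ->
  sumn t <= sumn s -> forall j, nth 0 s j = nth 0 t j.
Proof.
elim: s t => [|x s IH] [|y t] //=.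
move=> [] Hsz Hle Hsum j.
have H0 := Hle 0; have Hs : forall j, nth 0 s j <= nth 0 t j by move=> j'; exact: (Hle j'.+1).
have Hst : sumn s <= sumn t.
  elim: s t Hsz Hs {IH Hle Hsum H0} => [|x' s' IH'] [|y' t'] //= [] Hsz' Hs'.
  have := Hs' 0; have := IH' t' Hsz' (fun j => Hs' j.+1) => /=; lia.
have Hsum' : sumn t <= sumn s by simpl in *; lia.
case: j => [|j] /=; first by simpl in *; lia.
exact: IH.
Qed.

Lemma head_filter_iota (p : pred nat) m n i :
  i \in [seq j <- iota m n | p j] ->
  let a := head 0 [seq j <- iota m n | p j] in
  [/\ p a, m <= a <= i & forall j, m <= j < a -> ~~ p j].
Proof.
elim: n m => [|n IH] m //=.
case: ifP => Hp.
  rewrite inE => /orP [/eqP ->| Hi] /=; first by split => //; [rewrite leqnn | lia].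
  split => //; last lia.
  move: Hi; rewrite mem_filter mem_iota => /andP [_ ]; lia.
move=> /IH [H1 /andP [H2 H3] H4]; split => //; first by apply/andP; split; lia.
move=> j /andP [Hmj Hja]; case: (ltngtP m j) => Hj; [apply: H4; lia | lia | by rewrite -Hj Hp].
Qed.

Lemma tab_row_bound k lam mu T r : is_tab k lam mu T -> r < size mu ->
  nth 0 mu r <= nth 0 lam r + r.
Proof.
case=> H1 H2 _ Hr; rewrite leqNgt; apply/negP => Hlt.
have key : forall c, nth 0 lam r <= c < nth 0 mu r -> c - nth 0 lam r + 1 <= T r c.
  elim=> [|c IH] Hc.
    have := H1 r 0; rewrite /in_skew Hr Hc => /(_ isT); lia.
  case: (ltnP (nth 0 lam r) c.+1) => Hc'.
    have Hin : in_skew lam mu r c by rewrite /in_skew Hr; lia.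
    have Hin' : in_skew lam mu r c.+1 by rewrite /in_skew Hr Hc.
    have := H2 r c c.+1 Hin Hin' (ltnSn c); have := IH ltac:(lia); lia.
  have := H1 r c.+1; rewrite /in_skew Hr Hc => /(_ isT); lia.
have := key (nth 0 lam r + r) ltac:(lia).
have := H1 r (nth 0 lam r + r); rewrite /in_skew Hr => /(_ ltac:(lia)); lia.
Qed.

Lemma mu_le_mstar k lam mu T r : is_part k mu -> is_tab k lam mu T -> r < k ->
  nth 0 mu r <= mstar lam r.
Proof.
move=> /andP [/eqP Hsz Hs] HT Hr; apply: mstar_ge => j Hj.
have H1 := sorted_nth_geq Hs Hj; rewrite Hsz in H1; have {H1} H1 := H1 Hr.
have := @tab_row_bound k lam mu T j HT ltac:(rewrite Hsz; lia); lia.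
Qed.

Lemma mstar_lam k lam r : is_part k lam -> r < k -> nth 0 lam r <= mstar lam r.
Proof.
move=> /andP [/eqP Hsz Hs] Hr; apply: mstar_ge => j Hj.
have := sorted_nth_geq Hs Hj; rewrite Hsz => /(_ Hr); lia.
Qed.

Lemma mstar_decr lam r : mstar lam r.+1 <= mstar lam r.
Proof. by rewrite /= geq_minl. Qed.

Lemma nu_good k lam : is_part k lam ->
  let nu := mkseq (mstar lam) k in
  [/\ is_part k nu, subpart lam nu & tab_nonempty k lam nu].
Proof.
move=> Hl nu; have [/eqP Hsz Hs] := andP Hl.
have Hnth : forall r, r < k -> nth 0 nu r = mstar lam r by move=> r Hr; rewrite nth_mkseq.
have Hdec : forall r r', r <= r' -> mstar lam r' <= mstar lam r.
  move=> r r' /subnKC <-; elim: (r' - r) => [|n IH]; first by rewrite addn0.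
  rewrite addnS; have := mstar_decr lam (r + n); lia.
split.
- rewrite /is_part size_mkseq eqxx /=; apply/(sortedP 0) => r; rewrite size_mkseq => Hr.
  by rewrite /= !Hnth //; [apply: Hdec | lia].
- apply/allP => j; rewrite mem_iota Hsz /= => Hj; rewrite Hnth //; exact: mstar_lam Hl Hj.
- exists (fun r c => r + 1 + c - nth 0 nu r); split.
  + move=> r c /andP [Hr Hc]; move: Hr Hc; rewrite size_mkseq => Hr; rewrite Hnth //.
    have := @mstar_le lam r r (leqnn r); lia.
  + move=> r c c' /andP [Hr Hc] /andP [_ Hc'] Hcc; move: Hr Hc Hc'; rewrite size_mkseq => Hr.
    rewrite Hnth // => Hc Hc'; have := @mstar_le lam r r (leqnn r); lia.
  + move=> r r' c /andP [Hr Hc] /andP [Hr' Hc'] Hrr; move: Hr Hr' Hc Hc'; rewrite size_mkseq => Hr Hr'.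
    rewrite !Hnth // => Hc Hc'; have := Hdec r r' (ltnW Hrr).
    have := @mstar_le lam r r (leqnn r); have := @mstar_le lam r' r' (leqnn r'); lia.
Qed.

Lemma maximal_mstar k lam mu : is_part k lam -> maximal k lam mu ->
  forall r, r < k -> nth 0 mu r = mstar lam r.
Proof.
move=> Hl [Hm Hsub [T HT] Hmax] r Hr.
have [Hn1 Hn2 Hn3] := nu_good Hl.
have Hszm : size mu = k by case/andP: Hm => /eqP.
have Hle : forall j, nth 0 mu j <= nth 0 (mkseq (mstar lam) k) j.
  move=> j; case: (ltnP j k) => Hj; first by rewrite nth_mkseq //; exact: mu_le_mstar Hm HT Hj.
  by rewrite nth_default // Hszm.
have := @sumn_eq mu (mkseq (mstar lam) k) ltac:(by rewrite size_mkseq) Hle.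
rewrite leqNgt; case: ltnP => [Hlt|_ /(_ isT r)]; first by case: (Hmax _ Hn1 Hn2 Hlt Hn3).
by rewrite nth_mkseq.
Qed.

Lemma sylv_mstar k lam a i : is_part k lam -> a <= i -> i < k ->
  nth 0 lam a = nth 0 lam i ->
  sylv [seq x - nth 0 lam a | x <- take a lam] = mstar lam i - nth 0 lam i.
Proof.
move=> Hl Hai Hik Hav; have [/eqP Hsz Hs] := andP Hl.
set d := [seq x - nth 0 lam a | x <- take a lam].
have Hszd : size d = a by rewrite size_map size_take Hsz; case: ifP => // H; move/negbT: H; lia.
have Hnd : forall j, j < a -> nth 0 d j = nth 0 lam j - nth 0 lam a.
  by move=> j Hj; rewrite (nth_map 0) ?nth_take // size_take Hsz; case: ifP => // H; move/negbT: H; lia.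
have Hge : forall j, j <= i -> nth 0 lam i <= nth 0 lam j.
  by move=> j Hj; apply: sorted_nth_geq => //; rewrite Hsz.
have Hmi := mstar_lam Hl Hik.
have charP : forall m, subpart (staircase m) d = (nth 0 lam i + m <= mstar lam i).
  move=> m; apply/idP/idP.
  - move=> /allP Hsub.
    have Hst : forall j, j < m -> m - j <= nth 0 d j.
      move=> j Hj; have := Hsub j; rewrite size_map size_iota mem_iota /= => /(_ Hj).
      by rewrite (nth_map 0) ?size_iota // nth_iota.
    have Hma : m <= a.
      rewrite leqNgt; apply/negP => Ham; have := Hst a Ham; rewrite nth_default ?Hszd //; lia.
    apply: mstar_ge => j Hj; case: (ltnP j m) => Hjm.
      have := Hst j Hjm; rewrite Hnd; last lia.
      have := Hge j Hj; lia.
    have := Hge j Hj; lia.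
  - move=> Hm; apply/allP => j; rewrite size_map size_iota mem_iota /= => Hj.
    rewrite (nth_map 0) ?size_iota // nth_iota //.
    have Hma : m <= a by have := @mstar_le lam i a Hai; lia.
    rewrite Hnd; last lia.
    have := @mstar_le lam i j ltac:(lia); lia.
apply/eqP; rewrite eqn_leq; apply/andP; split.
- apply/bigmax_leqP_seq => m _; rewrite charP; lia.
- have Hm0 : subpart (staircase (mstar lam i - nth 0 lam i)) d by rewrite charP; lia.
  apply: (@leq_bigmax_seq _ _ _ (fun m => m) (mstar lam i - nth 0 lam i)) => //.
  rewrite mem_index_iota /=; case: (posnP (mstar lam i - nth 0 lam i)) => [->//|Hp].
  move/allP: Hm0 => /(_ 0); rewrite size_map size_iota mem_iota /= => /(_ Hp).
  rewrite (nth_map 0) ?size_iota // nth_iota //; lia.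
Qed.


Theorem proposition3p10 (k : nat) (lam mu : seq nat) (i h : nat) :
  is_part k lam -> maximal k lam mu ->
  h < size (Pblocks lam) -> i \in nth [::] (Pblocks lam) h ->
  nth 0 mu i = nth 0 lam i + sylv (lam_h lam h).
Proof.
move=> Hl Hmax Hh Hi; have [/eqP Hsz Hs] := andP Hl.
rewrite /Pblocks size_map in Hh; rewrite /Pblocks (nth_map 0) // in Hi.
set v := nth 0 (part_vals lam) h in Hi.
have [Hpa /andP [_ Hai] Hnot] := head_filter_iota Hi.
set a := head 0 _ in Hpa Hai Hnot.
move: Hi; rewrite mem_filter mem_iota /= => /andP [/eqP Hiv Hik].
rewrite Hsz in Hik.
have Hlh : lam_h lam h = [seq x - nth 0 lam a | x <- take a lam].
  rewrite /lam_h; case: eqP => [h0|_]; last by rewrite Hh /Pblocks (nth_map 0).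
  have Htot : total geq by move=> x y; exact: leq_total y x.
  have Hpv := sort_sorted Htot (undup lam).
  have H0in : nth 0 lam 0 \in part_vals lam.
    by rewrite /part_vals mem_sort mem_undup mem_nth // Hsz; lia.
  have Hv0 : nth 0 lam 0 <= v.
    rewrite /v h0 -(nth_index 0 H0in).
    apply: sorted_nth_geq => //; by rewrite index_mem.
  have H0i : nth 0 lam i <= nth 0 lam 0 by apply: sorted_nth_geq => //; rewrite Hsz.
  have Ha0 : a = 0.
    case: (posnP a) => // Hp; have := Hnot 0 ltac:(lia); rewrite /= -Hiv; case: eqP => //; lia.
  by rewrite Ha0 take0.
rewrite Hlh (maximal_mstar Hl Hmax Hik) (sylv_mstar Hl Hai Hik); last first.
  by rewrite Hiv; apply/eqP.
have := mstar_lam Hl Hik; lia.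
Qed.
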